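(* Let $A_G \in \mathbb{R}^{n_G\times n_G}$, $B_G \in \mathbb{R}^{n_G\times n_u}$ and consider the discrete-time plant $x(k+1) = A_G x(k) + B_G u(k)$ in feedback with the neural-network controller $u(k)=\pi(x(k))$ defined by $w^0(k)=x(k)$, $w^i(k)=\phi^i(W^i w^{i-1}(k))$ for $i=1,\dots,\ell$, $u(k)=W^{\ell+1}w^\ell(k)$, where $W^i\in\mathbb{R}^{n_i\times n_{i-1}}$ ($n_0=n_G$, $n_{\ell+1}=n_u$), and $\phi^i$ applies a scalar function $\varphi:\mathbb{R}\to\mathbb{R}$ with $\varphi(0)=0$ elementwise. Let $X=\{x\in\mathbb{R}^{n_G}: -h\le Hx\le h\}$ with $H\in\mathbb{R}^{n_X\times n_G}$, $h\in\mathbb{R}^{n_X}$, $h\ge 0$, and denote by $H_i^\top$ the $i$-th row of $H$ (so $H_i\in\mathbb{R}^{n_G}$). Set $n_\phi=n_1+\dots+n_\ell$, $v^i = W^i w^{i-1}$, $v_\phi=(v^1,\dots,v^\ell)$, $w_\phi=(w^1,\dots,w^\ell)\in\mathbb{R}^{n_\phi}$, and let $N=\begin{bmatrix} N_{ux} & N_{uw}\\ N_{vx} & N_{vw}\end{bmatrix}$ be the matrix with $\begin{bmatrix}u\\ v_\phi\end{bmatrix}=N\begin{bmatrix}x\\ w_\phi\end{bmatrix}$, i.e. $N_{ux}=0$, $N_{uw}=\begin{bmatrix}0&\cdots&0&W^{\ell+1}\end{bmatrix}$, $N_{vx}=\begin{bmatrix}W^1\\0\\\vdots\\0\end{bmatrix}$,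 and $N_{vw}$ is the block matrix whose only nonzero blocks are $W^2,\dots,W^\ell$ on the first block subdiagonal (block row $i$, block column $i-1$ equals $W^i$ for $i=2,\dots,\ell$). Let $\underline v,\bar v\in\mathbb{R}^{n_\phi}$ with $\underline v\le\bar v$ be such that $v_\phi\in[\underline v,\bar v]$ whenever $x\in X$, and let $\alpha_\phi,\beta_\phi\in\mathbb{R}^{n_\phi}$ with $\alpha_\phi\le\beta_\phi$ be such that for each $i=1,\dots,n_\phi$, $(\varphi(\nu)-\alpha_{\phi,i}\nu)(\beta_{\phi,i}\nu-\varphi(\nu))\ge 0$ for all $\nu\in[\underline v_i,\bar v_i]$. Put $A_\phi=\mathrm{diag}(\alpha_\phi)$, $B_\phi=\mathrm{diag}(\beta_\phi)$, $C_1=N_{uw}\frac{B_\phi-A_\phi}{2}$, $C_2=N_{uw}\frac{A_\phi+B_\phi}{2}$, $C_3=N_{vw}\frac{B_\phi-A_\phi}{2}$, $C_4=N_{vw}\frac{A_\phi+B_\phi}{2}$, and $$\tilde N=\begin{bmatrix}\tilde N_{ux}&\tilde N_{uz}\\ \tilde N_{vx}&\tilde N_{vz}\end{bmatrix}=\begin{bmatrix} N_{ux}+C_2(I-C_4)^{-1}N_{vx} & C_1+C_2(I-C_4)^{-1}C_3\\ (I-C_4)^{-1}N_{vx} & (I-C_4)^{-1}C_3\end{bmatrix},$$ with $\tilde R_V=\begin{bmatrix} I_{n_G} & 0\\ \tilde N_{ux}&\tilde N_{uz}\end{bmatrix}$ and $\tilde R_\phi=\begin{bmatrix}\tilde N_{vx}&\tilde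 N_{vz}\\ 0 & I_{n_\phi}\end{bmatrix}$. Suppose there exist $P\in\mathbb{S}^{n_G}_{++}$ and $\lambda\in\mathbb{R}^{n_\phi}$ with $\lambda\ge 0$ such that, with $\Lambda=\mathrm{diag}(\lambda)$, $$\tilde R_V^\top\begin{bmatrix}A_G^\top PA_G-P & A_G^\top PB_G\\ B_G^\top PA_G & B_G^\top PB_G\end{bmatrix}\tilde R_V+\tilde R_\phi^\top\begin{bmatrix}\Lambda&0\\0&-\Lambda\end{bmatrix}\tilde R_\phi<0$$ and $\begin{bmatrix} h_i^2 & H_i^\top\\ H_i & P\end{bmatrix}\ge 0$ for $i=1,\dots,n_X$. Then (i) the closed-loop system is locally asymptotically stable around the equilibrium $x_*=0$, and (ii) the ellipsoid $\mathcal{E}(P)=\{x: x^\top Px\le 1\}$ is contained in the region of attraction $\mathcal{R}=\{x_0\in X: \lim_{k\to\infty}\chi(k;x_0)=0\}$, where $\chi(k;x_0)$ is the closed-loop solution at time $k$ from $x(0)=x_0$.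
   Context: Inequalities between vectors are elementwise; $\mathbb{S}^n_{++}$ denotes symmetric positive definite $n\times n$ matrices; matrix inequalities $<0$, $\ge 0$ are in the sense of negative definiteness/positive semidefiniteness. The matrix $I-C_4$ is invertible because $N_{vw}$ is strictly block lower triangular. All biases of the network are zero so that $x_*=0$, $u_*=0$ is an equilibrium. *)

(* Defs.v *)
From HB Require Import structures.
From mathcomp Require Import all_boot all_order all_algebra.
From mathcomp Require Import all_classical all_reals all_analysis.
Set Implicit Arguments. Unset Strict Implicit. Unset Printing Implicit Defensive.
Import Order.TTheory GRing.Theory Num.Theory.
Import numFieldNormedType.Exports.
Local Open Scope ring_scope.
Local Open Scope classical_set_scope.

Section NN.
Variable R : realType.

Definition posdef n (M : 'M[R]_n) : Prop :=
  M^T = M /\ forall z : 'cV[R]_n, z != 0 -> 0 < (z^T *m M *m z) 0 0.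
Definition negdef n (M : 'M[R]_n) : Prop :=
  M^T = M /\ forall z : 'cV[R]_n, z != 0 -> (z^T *m M *m z) 0 0 < 0.
Definition psd n (M : 'M[R]_n) : Prop :=
  M^T = M /\ forall z : 'cV[R]_n, 0 <= (z^T *m M *m z) 0 0.

(* Layer sizes d : nat -> nat: d 0 = n_G, d i = n_i, d (l.+1) = n_u.
   W i : 'M_(d i.+1, d i) is the paper's W^{i+1}. *)
Variables (l : nat) (d : nat -> nat) (W : forall i : nat, 'M[R]_(d i.+1, d i))
          (varphi : R -> R).

Fixpoint wlayer (x : 'cV[R]_(d 0)) (i : nat) : 'cV[R]_(d i) :=
  match i with
  | 0 => x
  | i'.+1 => map_mx varphi (W i' *m wlayer x i')
  end.

Definition vlayer (x : 'cV[R]_(d 0)) (i : nat) : 'cV[R]_(d i.+1) :=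
  W i *m wlayer x i.

Definition nncontrol (x : 'cV[R]_(d 0)) : 'cV[R]_(d l.+1) := W l *m wlayer x l.

Definition nphi : nat := (\sum_(i < l) d i.+1)%N.

Definition vphi (x : 'cV[R]_(d 0)) : 'cV[R]_nphi :=
  @mxcol R l (fun i : 'I_l => d i.+1) 1 (fun i => vlayer x i).

Definition N_ux : 'M[R]_(d l.+1, d 0) := 0.
Definition N_uw : 'M[R]_(d l.+1, nphi) :=
  @mxrow R l (fun j : 'I_l => d j.+1) (d l.+1)
    (fun j => if (j.+1 == l)%N then conform_mx 0 (W l) else 0).
Definition N_vx : 'M[R]_(nphi, d 0) :=
  @mxcol R l (fun i : 'I_l => d i.+1) (d 0)
    (fun i => if (i == 0 :> nat)%N then conform_mx 0 (W 0) else 0).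
Definition N_vw : 'M[R]_(nphi, nphi) :=
  @mxblock R l l (fun i : 'I_l => d i.+1) (fun j : 'I_l => d j.+1)
    (fun i j => if (i == j.+1 :> nat)%N then conform_mx 0 (W i) else 0).

Definition closed_loop (AG : 'M[R]_(d 0)) (BG : 'M[R]_(d 0, d l.+1))
  (x : 'cV[R]_(d 0)) : 'cV[R]_(d 0) := AG *m x + BG *m nncontrol x.

Definition chi AG BG (k : nat) (x0 : 'cV[R]_(d 0)) : 'cV[R]_(d 0) :=
  iter k (closed_loop AG BG) x0.

End NN.

Definition lyap_stable (R : realType) n (f : 'cV[R]_n -> 'cV[R]_n) : Prop :=
  forall eps : R, 0 < eps -> exists delta : R, 0 < delta /\
    forall x0 : 'cV[R]_n, `|x0| < delta -> forall k, `|iter k f x0| < eps.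
Definition loc_attractive (R : realType) n (f : 'cV[R]_n -> 'cV[R]_n) : Prop :=
  exists delta : R, 0 < delta /\
    forall x0 : 'cV[R]_n, `|x0| < delta -> (fun k => iter k f x0) @ \oo --> (0 : 'cV[R]_n).
Definition loc_asympt_stable (R : realType) n (f : 'cV[R]_n -> 'cV[R]_n) : Prop :=
  f 0 = 0 /\ lyap_stable f /\ loc_attractive f.

(* Main.v *)
Require Import Defs.
From HB Require Import structures.
From mathcomp Require Import all_boot all_order all_algebra.
From mathcomp Require Import all_classical all_reals all_analysis.
From mathcomp Require Import ring lra.
Import Order.TTheory GRing.Theory Num.Theory.
Import numFieldNormedType.Exports.
Local Open Scope ring_scope.
Local Open Scope classical_set_scope.

Set Implicit Arguments. Unset Strict Implicit. Unset Printing Implicit Defensive.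

Section Anal.
Variable R : realType.

Definition qf n (M : 'M[R]_n) (z : 'cV[R]_n) : R := (z^T *m M *m z) 0 0.

Lemma entry_le_norm m n (A : 'M[R]_(m,n)) i j : `|A i j| <= `|A|.
Proof.
have /mapP[k Hk ->] : `|A i j| \in [seq `|A x.1 x.2| | x : 'I_m * 'I_n].
  by apply/mapP; exists (i, j) => //=; rewrite mem_enum.
by rewrite [leRHS]/Num.Def.normr /= mx_normrE; apply/bigmax_geP; right => /=; exists k.
Qed.

Lemma norm_le_bound m n (A : 'M[R]_(m,n)) c : 0 <= c ->
  (forall i j, `|A i j| <= c) -> `|A| <= c.
Proof.
move=> c0 H; rewrite [leLHS]/Num.Def.normr /= mx_normrE.
by apply: bigmax_le => // -[i j] _; exact: H.
Qed.

Lemma norm_tr m n (A : 'M[R]_(m,n)) : `|A^T| = `|A|.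
Proof.
apply/eqP; rewrite eq_le; apply/andP; split; apply: norm_le_bound => // i j.
  by rewrite mxE entry_le_norm.
by have := entry_le_norm (A^T) j i; rewrite mxE.
Qed.

Lemma qfZ n (M : 'M[R]_n) a z : qf M (a *: z) = a ^+ 2 * qf M z.
Proof.
rewrite /qf !linearZ /= !scalemxAl scalerA -!scalemxAl mxE expr2.
done.
Qed.

Lemma qf0 n (M : 'M[R]_n) : qf M 0 = 0.
Proof. by rewrite /qf trmx0 !mul0mx mxE. Qed.

Lemma qf_cont n (M : 'M[R]_n) : continuous (fun r : 'rV[R]_n => qf M r^T).
Proof.
have -> : (fun r : 'rV[R]_n => qf M r^T) =
   (fun r => \sum_j (\sum_k r 0 k * M k j) * r 0 j).
  apply/funext => r; rewrite /qf trmxK !mxE; apply: eq_bigr => j _.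
  by rewrite !mxE; congr (_ * _); apply: eq_bigr => k _; rewrite mxE.
apply: continuous_big; first exact: add_continuous.
move=> j _ r.
have hc : continuous (fun r : 'rV[R]_n => \sum_k r 0 k * M k j).
  apply: continuous_big; first exact: add_continuous.
  move=> k _ s.
  have := @continuousM R _ (fun x : 'rV[R]_n => x 0 k) (fun=> M k j) s
     (@coord_continuous R 1 n 0 k s) (@cst_continuous _ _ _ s).
  exact.
have := @continuousM R _ (fun r : 'rV[R]_n => \sum_k r 0 k * M k j)
            (fun x : 'rV[R]_n => x 0 j) r (hc r) (@coord_continuous R 1 n 0 j r).
exact.
Qed.

Lemma qf_lower n (M : 'M[R]_n) : (forall z, z != 0 -> 0 < qf M z) ->
  exists2 m, 0 < m & forall z, m * `|z| ^+ 2 <= qf M z.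
Proof.
move=> Mpos.
pose S := [set r : 'rV[R]_n | `|r| = 1].
have scal (z : 'cV[R]_n) : z != 0 -> S (`|z|^-1 *: z)^T.
  move=> z0; rewrite /S /= norm_tr normrZ normrV ?unitfE ?normr_eq0 //.
  by rewrite normr_id mulVf // normr_eq0.
have key (z : 'cV[R]_n) : z != 0 -> qf M z = `|z| ^+ 2 * qf M (`|z|^-1 *: z).
  move=> z0; rewrite qfZ mulrA -exprMn mulfV ?normr_eq0 // expr1n mul1r //.
case: (pselect (S !=set0)) => [Sne|Se]; last first.
  exists 1 => // z; have [->|z0] := eqVneq z 0; first by rewrite qf0 normr0 expr0n mulr0.
  by exfalso; apply: Se; exists (`|z|^-1 *: z)^T; exact: scal.
have cS : compact S.
  apply: bounded_closed_compact.
    rewrite /= /bounded_near.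
    apply: (filterS _ (@nbhs_pinfty_ge R 1 (num_real 1))).
    by move=> K K1 r /= ->.
  have := @preimage_closed _ R^o (@Num.norm _ 'rV[R]_n) [set x : R | x = 1].
  apply => [r _|]; first exact: norm_continuous.
  exact: closed_eq.
have [c cS' cmin] := compact_EVT_min Sne cS (continuous_subspaceT (@qf_cont n M)).
have c0 : c^T != 0.
  apply/eqP => /(congr1 trmx); rewrite trmxK trmx0 => c0.
  by move: cS'; rewrite inE /S /= c0 normr0 => /esym/eqP; rewrite oner_eq0.
exists (qf M c^T); first exact: Mpos.
move=> z; have [->|z0] := eqVneq z 0.
  by rewrite qf0 normr0 expr0n mulr0.
rewrite (key z z0) mulrC ler_pM2l ?exprn_gt0 ?normr_gt0 //.
by have := cmin _ (mem_set (scal z z0)); rewrite trmxK.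
Unshelve. all: by end_near.
Qed.

Lemma qf_upper n (M : 'M[R]_n) : exists2 c, 0 < c & forall z, qf M z <= c * `|z| ^+ 2.
Proof.
exists (1 + \sum_i \sum_j `|M i j|).
  by rewrite ltr_wpDr // sumr_ge0 // => i _; rewrite sumr_ge0.
move=> z; rewrite /qf.
have -> : (z^T *m M *m z) 0 0 = \sum_i \sum_j z i 0 * M i j * z j 0.
  rewrite mxE exchange_big /=; apply: eq_bigr => j _; rewrite !mxE big_distrl /=.
  by apply: eq_bigr => i _; rewrite !mxE.
rewrite mulrDl mul1r; apply: ler_wpDl; first by rewrite mulr_ge0 ?exprn_ge0.
rewrite big_distrl /=; apply: ler_sum => i _; rewrite big_distrl /=.
apply: ler_sum => j _; apply: (le_trans (ler_norm _)).
rewrite !normrM [`|z i 0| * _]mulrC -mulrA ler_wpM2l // expr2.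
by rewrite ler_pM ?entry_le_norm.
Qed.

Lemma qfD n (A B : 'M[R]_n) z : qf (A + B) z = qf A z + qf B z.
Proof. by rewrite /qf mulmxDr mulmxDl mxE. Qed.

Lemma qfN n (A : 'M[R]_n) z : qf (- A) z = - qf A z.
Proof. by rewrite /qf mulmxN mulNmx mxE. Qed.

Lemma qf_mul m n (S : 'M[R]_(m, n)) (Q : 'M[R]_m) z :
  qf (S^T *m Q *m S) z = qf Q (S *m z).
Proof. by rewrite /qf trmx_mul !mulmxA. Qed.

Lemma qf_block p q (A : 'M[R]_p) (B : 'M[R]_(p, q)) C (D : 'M[R]_q) y1 y2 :
  C = B^T ->
  qf (block_mx A B C D) (col_mx y1 y2) =
  qf A y1 + 2 * (y1^T *m B *m y2) 0 0 + qf D y2.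
Proof.
move=> ->; rewrite /qf tr_col_mx mul_row_block mul_row_col.
rewrite (mulmxDl (y1^T *m A)) (mulmxDl (y1^T *m B)).
have -> : (y2^T *m B^T *m y1) = (y1^T *m B *m y2)^T by rewrite !trmx_mul trmxK mulmxA.
set a := y1^T *m A *m y1; set b := y1^T *m B *m y2; set c := y2^T *m D *m y2.
rewrite !mxE; ring.
Qed.


Lemma qf_add_sym n (P : 'M[R]_n) y1 y2 : P^T = P ->
  qf P (y1 + y2) = qf P y1 + 2 * (y1^T *m P *m y2) 0 0 + qf P y2.
Proof.
move=> Ps; rewrite /qf linearD /= (linearD (trmx)) /= (mulmxDl y1^T) (mulmxDl (y1^T *m P)) (mulmxDl (y1^T *m P)).
have -> : (y2^T *m P *m y1) = (y1^T *m P *m y2)^T.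
  by rewrite !trmx_mul trmxK Ps mulmxA.
set a := y1^T *m P *m y1; set b := y1^T *m P *m y2; set c := y2^T *m P *m y2.
rewrite !mxE; ring.
Qed.


Lemma qf_diag n (a : 'rV[R]_n) z : qf (diag_mx a) z = \sum_k a 0 k * z k 0 ^+ 2.
Proof.
rewrite /qf mul_mx_diag mxE; apply: eq_bigr => k _; rewrite !mxE expr2.
by rewrite mulrCA mulrA.
Qed.

Lemma posdef_bound n (P : 'M[R]_n) : posdef P ->
  exists2 m, 0 < m & forall z, m * `|z| ^+ 2 <= qf P z.
Proof. by move=> [_ Pp]; apply: qf_lower. Qed.

Lemma negdef_bound n (M : 'M[R]_n) : negdef M ->
  exists2 e, 0 < e & forall z, qf M z <= - (e * `|z| ^+ 2).
Proof.
move=> [_ Mn]; have [|e e0 He] := @qf_lower n (- M).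
  by move=> z z0; rewrite qfN oppr_gt0; exact: Mn.
by exists e => // z; rewrite lerNr -qfN.
Qed.

Lemma norm_col_mx_ge p q (x : 'cV[R]_p) (z : 'cV[R]_q) : `|x| <= `|col_mx x z|.
Proof.
apply: norm_le_bound => // i j.
by have := entry_le_norm (col_mx x z) (lshift q i) j; rewrite col_mxEu.
Qed.

End Anal.

Section Blk.
Variables (R : realType) (l : nat) (d : nat -> nat)
  (W : forall i : nat, 'M[R]_(d i.+1, d i)) (varphi : R -> R).

Definition wphi (x : 'cV[R]_(d 0)) : 'cV[R]_(nphi l d) :=
  @mxcol R l (fun i : 'I_l => d i.+1) 1 (fun i => wlayer W varphi x i.+1).

Lemma wphiE x : wphi x = map_mx varphi (vphi l W varphi x).
Proof. by apply/matrixP => i j; rewrite !mxE. Qed.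

Lemma vphiE x : vphi l W varphi x = N_vx l W *m x + N_vw l W *m wphi x.
Proof.
rewrite /N_vx /N_vw /wphi /vphi mxcol_mul mul_mxblock_mxrow -mxcolD.
apply: eq_mxcol => -[[|i] Hi] /=.
  rewrite conform_mx_id big1 ?addr0 // => j _.
  by rewrite mul0mx.
rewrite mul0mx add0r (bigD1 (Ordinal (ltnW Hi))) //= eqxx conform_mx_id.
rewrite big1 ?addr0 // => j /= ji.
case: eqP => [E|]; last by rewrite mul0mx.
by exfalso; move/eqP: ji; apply; apply: val_inj => /=; case: E.
Qed.

End Blk.

Lemma ucontrolE (R : realType) (l : nat) (d : nat -> nat)
  (W : forall i : nat, 'M[R]_(d i.+1, d i)) (varphi : R -> R) x :
  (0 < l)%N -> nncontrol l W varphi x = N_uw l W *m wphi l W varphi x.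
Proof.
case: l => [//|l'] _.
rewrite /N_uw /wphi mul_mxrow_mxcol (bigD1 ord_max) //= eqxx conform_mx_id.
rewrite big1 ?addr0 // => j /= jm.
case: eqP => [E|]; last by rewrite mul0mx.
by exfalso; move/eqP: jm; apply; apply: val_inj => /=; case: E.
Qed.


Section Inv.
Import tagnat.
Variables (R : realType) (l : nat) (d : nat -> nat)
  (W : forall i : nat, 'M[R]_(d i.+1, d i)).

Lemma N_vw_entry k k' : ((sig1 k : nat) != (sig1 k').+1) -> N_vw l W k k' = 0.
Proof.
move=> H; rewrite /N_vw mxE.
by case: eqP => [E|_]; [rewrite E eqxx in H | rewrite mxE].
Qed.

Lemma unit_IC (delta : 'rV[R]_(nphi l d)) :
  (1%:M - N_vw l W *m diag_mx delta) \in unitmx.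
Proof.
rewrite -unitmx_tr -row_free_unit; apply: inj_row_free => v Hv.
set C := N_vw l W *m diag_mx delta in Hv.
have Hy : v^T = C *m v^T.
  move/(congr1 trmx): Hv; rewrite trmx_mul trmxK trmx0 mulmxBl mul1mx.
  by move/eqP; rewrite subr_eq0 => /eqP.
suff H : forall t (k : 'I_(nphi l d)), (sig1 k < t)%N -> v^T k 0 = 0.
  apply: trmx_inj; rewrite trmx0; apply/matrixP => k j.
  by rewrite ord1 (H (sig1 k).+1) ?mxE.
elim => [//|t IH] k kt.
rewrite Hy mxE big1 // => k' _.
rewrite /C mul_mx_diag mxE.
have [E|NE] := eqVneq (sig1 k : nat) (sig1 k').+1.
  by rewrite IH ?mulr0 // -ltnS -E.
by rewrite N_vw_entry // !mul0r.
Qed.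

End Inv.

Unset Implicit Arguments. Set Strict Implicit.

Theorem lemma2 (R : realType) (l : nat) (d : nat -> nat)
  (W : forall i : nat, 'M[R]_(d i.+1, d i)) (varphi : R -> R)
  (AG : 'M[R]_(d 0)) (BG : 'M[R]_(d 0, d l.+1))
  (nX : nat) (H : 'M[R]_(nX, d 0)) (h : 'cV[R]_nX)
  (vlo vhi alpha beta lambda : 'cV[R]_(nphi l d)) (P : 'M[R]_(d 0)) :
  (0 < l)%N ->
  varphi 0 = 0 ->
  (forall i, 0 <= h i 0) ->
  let X := [set x : 'cV[R]_(d 0) | forall i, - h i 0 <= (H *m x) i 0 <= h i 0] in
  (forall k, vlo k 0 <= vhi k 0) ->
  (forall x, X x -> forall k, vlo k 0 <= vphi l W varphi x k 0 <= vhi k 0) ->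
  (forall k, alpha k 0 <= beta k 0) ->
  (forall k (nu : R), vlo k 0 <= nu <= vhi k 0 ->
     0 <= (varphi nu - alpha k 0 * nu) * (beta k 0 * nu - varphi nu)) ->
  let Aphi := diag_mx alpha^T in
  let Bphi := diag_mx beta^T in
  let C1 := N_uw l W *m (2^-1 *: (Bphi - Aphi)) in
  let C2 := N_uw l W *m (2^-1 *: (Aphi + Bphi)) in
  let C3 := N_vw l W *m (2^-1 *: (Bphi - Aphi)) in
  let C4 := N_vw l W *m (2^-1 *: (Aphi + Bphi)) in
  let Ninv := invmx (1%:M - C4) in
  let Nt_ux := N_ux R l d + C2 *m Ninv *m N_vx l W in
  let Nt_uz := C1 + C2 *m Ninv *m C3 in
  let Nt_vx := Ninv *m N_vx l W in
  let Nt_vz := Ninv *m C3 in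
  let Rt_V : 'M[R]_(d 0 + d l.+1, d 0 + nphi l d) := block_mx 1%:M 0 Nt_ux Nt_uz in
  let Rt_phi : 'M[R]_(nphi l d + nphi l d, d 0 + nphi l d) :=
    block_mx Nt_vx Nt_vz 0 1%:M in
  let Lam := diag_mx lambda^T in
  posdef P ->
  (forall k, 0 <= lambda k 0) ->
  negdef (Rt_V^T *m block_mx (AG^T *m P *m AG - P) (AG^T *m P *m BG)
                             (BG^T *m P *m AG) (BG^T *m P *m BG) *m Rt_V
          + Rt_phi^T *m block_mx Lam 0 0 (- Lam) *m Rt_phi) ->
  (forall i : 'I_nX,
     psd (block_mx ((h i 0 ^+ 2)%:M : 'M[R]_1) (row i H) (row i H)^T P)) ->
  loc_asympt_stable (closed_loop W varphi AG BG) /\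
  (forall x0 : 'cV[R]_(d 0), (x0^T *m P *m x0) 0 0 <= 1 ->
     X x0 /\ (fun k => chi W varphi AG BG k x0) @ \oo --> (0 : 'cV[R]_(d 0))).
Proof.
move=> l0 phi0 h0 X vle Xv ab sec Aphi Bphi C1 C2 C3 C4 Ninv Nt_ux Nt_uz
  Nt_vx Nt_vz Rt_V Rt_phi Lam Ppd lam0 Mnd Hpsd.
have [e e0 He] := negdef_bound Mnd.
have Psym : P^T = P by case: Ppd.
pose f := closed_loop W varphi AG BG.
have step : forall x, X x -> qf P (f x) <= qf P x - e * `|x| ^+ 2.
  move=> x Xx.
  have vphiE' := vphiE l W varphi x.
  have wphiE' := wphiE l W varphi x.
  have uE0 := ucontrolE W varphi x l0.
  have Xvx := Xv x Xx.
  move: (vphi l W varphi x) vphiE' wphiE' Xvx => v vphiE' wphiE' Xvx.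
  set w := map_mx varphi v.
  pose cc k := (alpha k 0 + beta k 0) / 2.
  pose rr k := (beta k 0 - alpha k 0) / 2.
  pose z : 'cV[R]_(nphi l d) :=
    \col_k (if rr k != 0 then (w k 0 - cc k * v k 0) / rr k else 0).
  have F1 : forall k, w k 0 = cc k * v k 0 + rr k * z k 0.
    move=> k; rewrite /z mxE /w mxE.
    have [r0|rn0] := eqVneq (rr k) 0.
      have ab' : alpha k 0 = beta k 0 by move: r0; rewrite /rr; lra.
      have := sec k (v k 0) (Xvx k).
      rewrite -ab' => H0.
      have H1 : (varphi (v k 0) - alpha k 0 * v k 0) ^+ 2 = 0.
        by apply/eqP; rewrite eq_le sqr_ge0 andbT; nra.
      move/eqP: H1; rewrite sqrf_eq0 subr_eq0 => /eqP ->.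
      rewrite r0 /cc ab'; lra.
    by rewrite [in RHS]mxE /= [rr k * _]mulrC divfK //; ring.
  have F2 : forall k, z k 0 ^+ 2 <= v k 0 ^+ 2.
    move=> k; have := sec k (v k 0) (Xvx k).
    have -> : varphi (v k 0) = w k 0 by rewrite /w mxE.
    rewrite F1; set zz := z k 0; set vv := v k 0 => Hs.
    have E : (cc k * vv + rr k * zz - alpha k 0 * vv) *
             (beta k 0 * vv - (cc k * vv + rr k * zz)) =
             rr k ^+ 2 * (vv ^+ 2 - zz ^+ 2).
      by rewrite /cc /rr; field.
    rewrite E in Hs.
    have [r0|rn0] := eqVneq (rr k) 0.
      by rewrite /zz /z mxE r0 eqxx expr0n /= sqr_ge0.
    have rpos : 0 < rr k ^+ 2 by rewrite lt_def sqr_ge0 sqrf_eq0 rn0.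
    by move: Hs; rewrite pmulr_rge0 // subr_ge0.
  clearbody z.
  have Dc : 2^-1 *: (Aphi + Bphi) = diag_mx (\row_k cc k).
    apply/matrixP => i j; rewrite !mxE; case: (i == j); rewrite /= ?mulr1n ?mulr0n.
      by rewrite /cc mulrC.
    by rewrite addr0 mulr0.
  have Dr : 2^-1 *: (Bphi - Aphi) = diag_mx (\row_k rr k).
    apply/matrixP => i j; rewrite !mxE; case: (i == j); rewrite /= ?mulr1n ?mulr0n.
      by rewrite /rr mulrC.
    by rewrite subr0 mulr0.
  have Wz : w = 2^-1 *: (Aphi + Bphi) *m v + 2^-1 *: (Bphi - Aphi) *m z.
    apply/matrixP => k j; rewrite ord1 F1 Dc Dr !mul_diag_mx !mxE.
    done.
  have unitA : (1%:M - C4) \in unitmx by rewrite /C4 Dc unit_IC.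
  have Av : (1%:M - C4) *m v = N_vx l W *m x + C3 *m z.
    rewrite mulmxBl mul1mx {1}vphiE' wphiE' -/w Wz mulmxDr /C4 /C3 !mulmxA.
    set b := (X in _ + (X + _) - X); set c := (X in _ + (_ + X) - _).
    by rewrite [b + c]addrC addrA addrK.
  have vE : v = Nt_vx *m x + Nt_vz *m z.
    by rewrite -(mulKmx unitA v) Av /Nt_vx /Nt_vz /Ninv mulmxDr !mulmxA.
  have uE : nncontrol l W varphi x = Nt_ux *m x + Nt_uz *m z.
    rewrite uE0 wphiE' -/w Wz mulmxDr !mulmxA -/C2 -/C1 vE mulmxDr !mulmxA.
    rewrite /Nt_ux /Nt_uz /Nt_vx /Nt_vz /N_ux add0r !mulmxDl !mulmxA.
    by rewrite [C1 *m z + _]addrC addrA.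
  have RV : Rt_V *m col_mx x z = col_mx x (nncontrol l W varphi x).
    by rewrite /Rt_V mul_block_col mul1mx mul0mx addr0 uE.
  have Rphi : Rt_phi *m col_mx x z = col_mx v z.
    by rewrite /Rt_phi mul_block_col mul0mx add0r mul1mx vE.
  have := He (col_mx x z); rewrite qfD !qf_mul RV Rphi.
  set u := nncontrol l W varphi x.
  rewrite (qf_block _ _ _ _ (B := AG^T *m P *m BG)); last first.
    by rewrite !trmx_mul trmxK Psym mulmxA.
  rewrite (qf_block _ _ _ _ (B := 0)); last by rewrite trmx0.
  have E0 : (0 : 'M[R]_1) 0 0 = 0 by rewrite mxE.
  rewrite mulmx0 mul0mx E0 mulr0 addr0 qfD qfN !qf_mul.
  have -> : f x = AG *m x + BG *m u by [].
  rewrite qf_add_sym // !trmx_mul.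
  have Lpos : 0 <= qf Lam v - qf Lam z.
    rewrite /Lam !qf_diag -sumrB; apply: sumr_ge0 => k _.
    by rewrite !mxE -mulrBr mulr_ge0 ?lam0 // subr_ge0 F2.
  have Nx : e * `|x| ^+ 2 <= e * `|col_mx x z| ^+ 2.
    apply: ler_wpM2l; first exact: ltW e0.
    by rewrite ler_pXn2r // ?nnegrE ?normr_ge0 // norm_col_mx_ge.
  rewrite qfN !mulmxA.
  set q1 := qf P (AG *m x); set q2 := qf P (BG *m u).
  set cr := (x^T *m AG^T *m P *m BG *m u) 0 0.
  move: Lpos Nx; set a1 := qf Lam v; set a2 := qf Lam z.
  set n1 := `|x| ^+ 2; set n2 := `|col_mx x z| ^+ 2.
  lra.
have inX : forall x, qf P x <= 1 -> X x.
  move=> x Vx i; have [_ Hp] := Hpsd i.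
  set s := (H *m x) i 0; set V := qf P x; set hh := h i 0.
  have Q : forall a b, 0 <= a ^+ 2 * hh ^+ 2 + 2 * (a * b * s) + b ^+ 2 * V.
    move=> a b; have := Hp (col_mx ((a%:M) : 'M[R]_1) (b *: x)).
    rewrite -[X in 0 <= X]/(qf _ _).
    rewrite (qf_block _ _ _ _ (B := row i H)) // qfZ.
    have -> : qf (hh ^+ 2)%:M (a%:M : 'M[R]_1) = a ^+ 2 * hh ^+ 2.
      by rewrite /qf tr_scalar_mx -!scalar_mxM !mxE eqxx mulr1n; ring.
    have -> : (((a%:M) : 'M[R]_1)^T *m row i H *m (b *: x)) 0 0 = a * b * s.
      rewrite tr_scalar_mx mul_scalar_mx -scalemxAl -scalemxAr -row_mul /s !mxE.
      by rewrite mulrA.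
    by [].
  have V0 : 0 <= V by have := Q 0 1; lra.
  have hh0 : 0 <= hh := h0 i.
  have [hz|hnz] := eqVneq hh 0.
    have [sz|snz] := eqVneq s 0; first by rewrite sz hz oppr0 lexx.
    have := Q ((V + 1) / s) (-1).
    have -> : (V + 1) / s * -1 * s = - (V + 1) by rewrite mulrN1 mulNr divfK.
    rewrite hz; lra.
  have hp : 0 < hh by rewrite lt_def hnz hh0.
  have H2 : 0 <= hh ^+ 2 * (hh ^+ 2 * V - s ^+ 2).
    by have := Q s (- hh ^+ 2); lra.
  move: H2; rewrite pmulr_rge0 ?exprn_gt0 // subr_ge0 => H2.
  have H4 : hh ^+ 2 * V <= hh ^+ 2 * 1 by rewrite ler_wpM2l ?sqr_ge0.
  have H3 : s ^+ 2 <= hh ^+ 2 by lra.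
  by apply/andP; split; nra.
have [m m0 Hm] := posdef_bound Ppd.
have [c c0 Hc] := qf_upper P.
have V0 : forall y, 0 <= qf P y.
  move=> y; apply: le_trans (Hm y); apply: mulr_ge0; [exact: ltW | exact: sqr_ge0].
pose e' := Num.min e c.
have e'0 : 0 < e' by rewrite lt_min e0 c0.
have e'e : e' <= e by rewrite ge_min lexx.
have e'c : e' <= c by rewrite ge_min lexx orbT.
pose rho := 1 - e' / c.
have rho0 : 0 <= rho by rewrite subr_ge0 ler_pdivrMr // mul1r.
have rho1 : rho < 1 by rewrite ltrBlDr ltrDl divr_gt0.
have dec : forall x, qf P x <= 1 -> qf P (f x) <= rho * qf P x.
  move=> x Vx; have := step x (inX x Vx).
  have h1 : qf P x / c <= `|x| ^+ 2 by rewrite ler_pdivrMr // mulrC.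
  have h2 : e' * (qf P x / c) <= e' * `|x| ^+ 2 by apply: ler_wpM2l => //; exact: ltW.
  have h3 : e' * `|x| ^+ 2 <= e * `|x| ^+ 2 by apply: ler_wpM2r => //; exact: sqr_ge0.
  have h4 : rho * qf P x = qf P x - e' * (qf P x / c) by rewrite /rho; ring.
  rewrite h4; lra.
have iterb : forall x0, qf P x0 <= 1 -> forall k,
    qf P (iter k f x0) <= rho ^+ k * qf P x0.
  move=> x0 H0; elim => [|k IH]; first by rewrite expr0 mul1r.
  have rk1 : rho ^+ k <= 1 by exact: exprn_ile1 rho0 (ltW rho1).
  have Hk1 : qf P (iter k f x0) <= 1.
    apply: (le_trans IH); apply: (le_trans _ H0).
    exact: ler_piMl (V0 _) rk1.
  rewrite iterS; apply: (le_trans (dec _ Hk1)).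
  by rewrite exprS -mulrA; apply: ler_wpM2l.
have normb : forall x0, qf P x0 <= 1 -> forall k,
    m * `|iter k f x0| ^+ 2 <= rho ^+ k * qf P x0.
  by move=> x0 H0 k; apply: le_trans (Hm _) (iterb x0 H0 k).
have sqlt : forall a b : R, 0 <= a -> 0 < b -> a ^+ 2 < b ^+ 2 -> a < b.
  move=> a b a0 b0 hab; nra.
have conv : forall x0, qf P x0 <= 1 -> (fun k => iter k f x0) @ \oo --> (0 : 'cV[R]_(d 0)).
  move=> x0 H0; apply/(@cvgr0Pnorm_lt R 'cV[R]_(d 0)) => eps eps0.
  have rhoabs : `|rho| < 1 by rewrite ger0_norm.
  pose eps' := eps ^+ 2 * m / (qf P x0 + 1).
  have eps'0 : 0 < eps' by rewrite divr_gt0 ?mulr_gt0 ?exprn_gt0 // ltr_wpDl ?V0.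
  have Hn : \forall k \near \oo, `|rho ^+ k| < eps'.
    exact: (iffLR (cvgr0Pnorm_lt _)) (cvg_expr rhoabs) _ eps'0.
  near=> k.
  have Hk : `|rho ^+ k| < eps' by near: k; exact: Hn.
  rewrite ger0_norm ?exprn_ge0 // in Hk.
  apply: sqlt => //; have := normb x0 H0 k.
  have : rho ^+ k * qf P x0 <= rho ^+ k * (qf P x0 + 1).
    by rewrite ler_wpM2l ?exprn_ge0 // lerDl.
  have : rho ^+ k * (qf P x0 + 1) < eps' * (qf P x0 + 1).
    by rewrite ltr_pM2r // ltr_wpDl ?V0.
  rewrite /eps' divfK; last by rewrite gt_eqF // ltr_wpDl ?V0.
  move=> h1 h2 h3.
  have : m * `|iter k f x0| ^+ 2 < m * eps ^+ 2 by rewrite mulrC; lra.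
  by rewrite ltr_pM2l.
have f0 : f 0 = 0.
  have wl0 : forall i, wlayer W varphi 0 i = 0.
    elim => //= i IH; rewrite IH mulmx0; apply/matrixP => a b.
    by rewrite !mxE phi0.
  by rewrite /f /closed_loop /nncontrol wl0 !mulmx0 addr0.
have sqlt2 : forall a b : R, 0 <= a -> a < b -> a ^+ 2 < b ^+ 2.
  move=> a b a0 hab; nra.
split; last first.
  by move=> x0 Hx0; split; [exact: inX | exact: conv x0 Hx0].
split; first exact: f0.
split.
  move=> eps eps0.
  pose dl := Num.min (Num.min 1 (eps ^+ 2)) (Num.min c^-1 (m / c)).
  have dl0 : 0 < dl.
    by rewrite !lt_min ltr01 exprn_gt0 // invr_gt0 c0 divr_gt0.
  have dl1 : dl <= 1 by rewrite !ge_min lexx.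
  have dle : dl <= eps ^+ 2 by rewrite !ge_min lexx !orbT.
  have dlc : dl <= c^-1 by rewrite !ge_min lexx !orbT.
  have dlm : dl <= m / c by rewrite !ge_min lexx !orbT.
  exists dl; split => // x0 Hx0 k.
  have cdl1 : c * dl <= 1.
    by have := ler_wpM2l (ltW c0) dlc; rewrite mulfV ?gt_eqF.
  have cdlm : c * dl <= m.
    by have := ler_wpM2l (ltW c0) dlm; rewrite mulrCA mulfV ?gt_eqF // mulr1.
  have n0 := normr_ge0 x0.
  have hA : c * `|x0| ^+ 2 < c * dl ^+ 2 by rewrite ltr_pM2l // sqlt2.
  have hB : c * dl ^+ 2 <= dl.
    by rewrite expr2 mulrA; apply: ler_piMl; [exact: ltW | exact: cdl1].
  have hC : c * dl ^+ 2 <= m * dl.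
    by rewrite expr2 mulrA; apply: ler_wpM2r => //; exact: ltW.
  have hD : m * dl <= m * eps ^+ 2 by apply: ler_wpM2l => //; exact: ltW.
  have Hcx := Hc x0.
  have Vx1 : qf P x0 <= 1 by lra.
  have hE := normb x0 Vx1 k.
  have hF : rho ^+ k * qf P x0 <= qf P x0.
    by apply: ler_piMl; [exact: V0 | exact: exprn_ile1 rho0 (ltW rho1)].
  apply: sqlt => //.
  have : m * `|iter k f x0| ^+ 2 < m * eps ^+ 2 by lra.
  by rewrite ltr_pM2l.
exists (Num.min 1 c^-1); split; first by rewrite lt_min ltr01 invr_gt0.
move=> x0 Hx0; apply: conv.
have dl1 : Num.min 1 c^-1 <= 1 by rewrite ge_min lexx.
have dlc : Num.min 1 c^-1 <= c^-1 by rewrite ge_min lexx orbT.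
set dl := Num.min 1 c^-1 in Hx0 dl1 dlc.
have dl0 : 0 <= dl by apply: le_trans (normr_ge0 x0) (ltW Hx0).
have cdl1 : c * dl <= 1.
  by have := ler_wpM2l (ltW c0) dlc; rewrite mulfV ?gt_eqF.
have hA : c * `|x0| ^+ 2 <= c * dl ^+ 2.
  by apply: ler_wpM2l; [exact: ltW | exact: ltW (sqlt2 _ _ (normr_ge0 x0) Hx0)].
have hB : c * dl ^+ 2 <= dl.
  by rewrite expr2 mulrA; apply: ler_piMl.
have Hcx := Hc x0.
lra.
Unshelve. all: by end_near.
Qed.
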